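(* Let $M,N\in\mathbb{R}^{(k+n)\times(k+n)}$ be symmetric, partitioned as $M=\begin{bmatrix} M_{11} & M_{12}\\ M_{12}^\top & M_{22}\end{bmatrix}$, $N=\begin{bmatrix} N_{11} & N_{12}\\ N_{12}^\top & N_{22}\end{bmatrix}$ with $M_{11},N_{11}\in\mathbb{R}^{k\times k}$ and $M_{22},N_{22}\in\mathbb{R}^{n\times n}$. Assume $M_{22}\le 0$, $N_{22}\le 0$ and $\ker N_{22}\subseteq\ker N_{12}$, and that there exists $\bar Z\in\mathbb{R}^{n\times k}$ with $\begin{bmatrix} I\\ \bar Z\end{bmatrix}^\top N\begin{bmatrix} I\\ \bar Z\end{bmatrix}>0$. Let $\mathcal{S}_N:=\{Z\in\mathbb{R}^{n\times k}\mid \begin{bmatrix} I\\ Z\end{bmatrix}^\top N\begin{bmatrix} I\\ Z\end{bmatrix}\ge 0\}$. Then $\begin{bmatrix} I\\ Z\end{bmatrix}^\top M\begin{bmatrix} I\\ Z\end{bmatrix}>0$ for all $Z\in\mathcal{S}_N$ if and only if there exist $\alpha\ge 0$ and $\beta>0$ such that $$M-\alpha N\ge\begin{bmatrix}\beta I & 0\\ 0 & 0\end{bmatrix}.$$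
   Context: $I$ denotes the $k\times k$ identity. For symmetric matrices, $\ge 0$ means positive semidefinite, $>0$ positive definite, and $A\ge B$ means $A-B\ge0$. *)

(* Defs.v *)
From HB Require Import structures.
From mathcomp Require Import all_boot all_order all_algebra.
From mathcomp Require Import reals.
Set Implicit Arguments. Unset Strict Implicit. Unset Printing Implicit Defensive.
Import Order.TTheory GRing.Theory Num.Theory.
Local Open Scope ring_scope.

Definition sym_mx (R : realType) (m : nat) (A : 'M[R]_m) : Prop := A^T = A.

Definition psd (R : realType) (m : nat) (A : 'M[R]_m) : Prop :=
  forall v : 'cV[R]_m, 0 <= (v^T *m A *m v) 0 0.

Definition pd (R : realType) (m : nat) (A : 'M[R]_m) : Prop :=
  forall v : 'cV[R]_m, v != 0 -> 0 < (v^T *m A *m v) 0 0.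

Definition IZ (R : realType) (k n : nat) (Z : 'M[R]_(n, k)) : 'M[R]_(k + n, k) :=
  col_mx 1%:M Z.

Definition qform (R : realType) (k n : nat) (N : 'M[R]_(k + n)) (Z : 'M[R]_(n, k))
  : 'M[R]_k := (IZ Z)^T *m N *m IZ Z.

Definition S_N (R : realType) (k n : nat) (N : 'M[R]_(k + n)) : 'M[R]_(n, k) -> Prop :=
  fun Z => psd (qform N Z).

(* Main.v *)
Require Import Defs.
From HB Require Import structures.
From mathcomp Require Import all_boot all_order all_algebra.
From mathcomp Require Import reals.
From mathcomp Require Import all_classical all_reals all_analysis.
From mathcomp Require Import lra ring.
Set Implicit Arguments. Unset Strict Implicit. Unset Printing Implicit Defensive.
Import Order.TTheory GRing.Theory Num.Theory numFieldNormedType.Exports.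
Local Open Scope ring_scope.
Local Open Scope classical_set_scope.

Section Cont.
Variable R : realType.
Variable m : nat.

Lemma cont_sum (F : 'I_m -> 'rV[R]_m -> R) :
  (forall i, continuous (F i)) -> continuous (fun r => \sum_(i < m) F i r).
Proof.
move=> cF.
suff H : forall s : seq 'I_m, continuous (fun r => \sum_(i <- s) F i r).
  by apply: H.
elim=> [|i s IH].
  have -> : (fun r : 'rV[R]_m => \sum_(i <- [::]) F i r) = (fun=> 0).
    by apply/funext=> r; rewrite big_nil.
  exact: cst_continuous.
have -> : (fun r => \sum_(j <- i :: s) F j r) = (F i + fun r => \sum_(j <- s) F j r).
  by apply/funext=> r; rewrite big_cons.
move=> x; apply: continuousD; [exact: cF | exact: IH].
Qed.

Lemma cont_coord (i : 'I_m) : continuous (fun r : 'rV[R]_m => r 0 i).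
Proof. exact: coord_continuous. Qed.

Lemma cont_lin (u : 'cV[R]_m) : continuous (fun r : 'rV[R]_m => (r *m u) 0 0).
Proof.
have -> : (fun r : 'rV[R]_m => (r *m u) 0 0) = (fun r => \sum_(i < m) (fun j r => r 0 j * u j 0) i r).
  by apply/funext=> r; rewrite mxE.
apply: cont_sum => i x.
apply: continuousM; [exact: cont_coord | exact: cst_continuous].
Qed.

Lemma cont_quad (A : 'M[R]_m) : continuous (fun r : 'rV[R]_m => (r *m A *m r^T) 0 0).
Proof.
have -> : (fun r : 'rV[R]_m => (r *m A *m r^T) 0 0) =
   (fun r => \sum_(j < m) (fun j r => (r *m col j A) 0 0 * r 0 j) j r).
  apply/funext=> r; rewrite mxE; apply: eq_bigr => j _.
  by rewrite !mxE; congr (_ * _); apply: eq_bigr => i _; rewrite !mxE.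
apply: cont_sum => j x.
apply: continuousM; [exact: cont_lin | exact: cont_coord].
Qed.

End Cont.


Section Comp.
Variable R : realType.
Variable m : nat.

Definition nsq (r : 'rV[R]_m) : R := (r *m r^T) 0 0.

Lemma nsqE r : nsq r = \sum_(i < m) r 0 i ^+ 2.
Proof. by rewrite /nsq mxE; apply: eq_bigr => i _; rewrite !mxE expr2. Qed.

Lemma nsq_ge0 r : 0 <= nsq r.
Proof. by rewrite nsqE; apply: sumr_ge0 => i _; exact: sqr_ge0. Qed.

Lemma nsq_eq0 r : nsq r = 0 -> r = 0.
Proof.
rewrite nsqE => /eqP; rewrite psumr_eq0; last by move=> i _; exact: sqr_ge0.
move=> /allP H; apply/matrixP => i j; rewrite (ord1 i) mxE.
by have := H j (mem_index_enum j); rewrite sqrf_eq0 => /eqP.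
Qed.

Lemma nsqZ s r : nsq (s *: r) = s ^+ 2 * nsq r.
Proof. by rewrite /nsq linearZ /= -scalemxAl -scalemxAr !mxE mulrA expr2. Qed.

Lemma cont_nsq : continuous nsq.
Proof.
have -> : nsq = (fun r : 'rV[R]_m => (r *m 1%:M *m r^T) 0 0).
  by apply/funext => r; rewrite mulmx1.
exact: cont_quad.
Qed.

Lemma coord_le1 r i : nsq r = 1 -> `|r 0 i| <= 1.
Proof.
move=> H.
have : r 0 i ^+ 2 <= 1.
  rewrite -H nsqE (bigD1 i) //= lerDl; apply: sumr_ge0 => j _; exact: sqr_ge0.
move=> h; rewrite ler_norml; apply/andP; split; nra.
Qed.

Lemma cone_unif (q : 'rV[R]_m -> R) (P : set 'rV[R]_m) :
  continuous q -> closed P -> (forall r, P r -> r != 0 -> 0 < q r) ->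
  (forall r s, P r -> 0 < s -> P (s *: r)) ->
  (forall r s, q (s *: r) = s ^+ 2 * q r) ->
  exists beta, 0 < beta /\ forall r, P r -> beta * nsq r <= q r.
Proof.
move=> cq cP pos scP scq.
have q0 : q 0 = 0.
  by have := scq 0 0; rewrite scale0r expr2 !mul0r.
pose T := P `&` (nsq @^-1` [set x | x <= 1] `&` nsq @^-1` [set x | 1 <= x]).
have normT : forall r, P r -> r != 0 ->
    T ((Num.sqrt (nsq r))^-1 *: r) /\ 0 < nsq r.
  move=> r Pr rn0.
  have np : 0 < nsq r.
    rewrite lt_def nsq_ge0 andbT; apply/eqP => h; move/eqP: rn0; apply.
    exact: nsq_eq0.
  split => //; split; first by apply: scP => //; rewrite invr_gt0 sqrtr_gt0.
  have e : nsq ((Num.sqrt (nsq r))^-1 *: r) = 1.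
    by rewrite nsqZ exprVn sqr_sqrtr ?mulVf // ?nsq_ge0 // gt_eqF.
  by rewrite /= e.
have [[c0 Tc0]|T0] := pselect (T !=set0); last first.
  exists 1; split => // r Pr; have [->|rn0] := eqVneq r 0.
    by rewrite q0 /nsq mul0mx mxE mulr0.
  by exfalso; apply: T0; exists ((Num.sqrt (nsq r))^-1 *: r); case: (normT r Pr rn0).
have cT : compact T.
  apply: bounded_closed_compact.
    exists 1; split; first exact: num_real.
    move=> x x1 r [_ [Tr1 Tr2]] /=.
    have Tr : nsq r = 1 by apply/eqP; rewrite eq_le Tr1 Tr2.
    apply: (le_trans _ (ltW x1)).
    rewrite [X in X <= _]mx_normrE; apply: bigmax_le => // ij _.
    by rewrite (ord1 ij.1); exact: coord_le1.
  apply: closedI => //.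
  apply: closedI; apply: preimage_closed.
  - by move=> x _; exact: cont_nsq.
  - exact: closed_le.
  - by move=> x _; exact: cont_nsq.
  - exact: closed_ge.
have [c Tc cmin] := compact_EVT_min (ex_intro _ c0 Tc0) cT (continuous_subspaceT cq).
move: Tc; rewrite inE => -[Pc [nc1 nc2]].
have nc : nsq c = 1 by apply/eqP; rewrite eq_le nc1 nc2.
have cn0 : c != 0 by apply/eqP => h; move: nc; rewrite h /nsq mul0mx mxE => /eqP; rewrite eq_sym oner_eq0.
exists (q c); split; first exact: pos.
move=> r Pr; have [->|rn0] := eqVneq r 0.
  by rewrite q0 /nsq mul0mx mxE mulr0.
have [Tr np] := normT r Pr rn0.
have := cmin _ (mem_set Tr); rewrite scq exprVn sqr_sqrtr ?nsq_ge0 //.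
move=> h; have := ler_wpM2l (ltW np) h; rewrite mulrA divff ?gt_eqF // mul1r mulrC. done.
Qed.

End Comp.


Section BF.
Variable R : realType.

Definition bf (p : nat) (A : 'M[R]_p) (u v : 'cV[R]_p) : R := (u^T *m A *m v) 0 0.

Variable p : nat.
Implicit Types (A B : 'M[R]_p) (u v w : 'cV[R]_p).

Lemma bfDl A u1 u2 v : bf A (u1 + u2) v = bf A u1 v + bf A u2 v.
Proof. by rewrite /bf linearD /= !mulmxDl mxE. Qed.
Lemma bfDr A u v1 v2 : bf A u (v1 + v2) = bf A u v1 + bf A u v2.
Proof. by rewrite /bf !mulmxDr mxE. Qed.
Lemma bfZl A s u v : bf A (s *: u) v = s * bf A u v.
Proof. by rewrite /bf linearZ /= -!scalemxAl mxE. Qed.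
Lemma bfZr A s u v : bf A u (s *: v) = s * bf A u v.
Proof. by rewrite /bf -!scalemxAr mxE. Qed.
Lemma bfNl A u v : bf A (- u) v = - bf A u v.
Proof. by rewrite -scaleN1r bfZl mulN1r. Qed.
Lemma bfNr A u v : bf A u (- v) = - bf A u v.
Proof. by rewrite -scaleN1r bfZr mulN1r. Qed.
Lemma bfBl A u1 u2 v : bf A (u1 - u2) v = bf A u1 v - bf A u2 v.
Proof. by rewrite bfDl bfNl. Qed.
Lemma bfBr A u v1 v2 : bf A u (v1 - v2) = bf A u v1 - bf A u v2.
Proof. by rewrite bfDr bfNr. Qed.
Lemma bfMD A B u v : bf (A + B) u v = bf A u v + bf B u v.
Proof. by rewrite /bf mulmxDr mulmxDl mxE. Qed.
Lemma bfMZ A s u v : bf (s *: A) u v = s * bf A u v.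
Proof. by rewrite /bf -scalemxAr -scalemxAl mxE. Qed.
Lemma bfMN A u v : bf (- A) u v = - bf A u v.
Proof. by rewrite -scaleN1r bfMZ mulN1r. Qed.
Lemma bfMB A B u v : bf (A - B) u v = bf A u v - bf B u v.
Proof. by rewrite bfMD bfMN. Qed.
Lemma bf_sym A u v : A^T = A -> bf A u v = bf A v u.
Proof.
move=> sA; rewrite /bf -[in LHS](trmxK (u^T *m A *m v)) mxE.
by rewrite !trmx_mul trmxK sA mulmxA.
Qed.
Lemma bf0l A v : bf A 0 v = 0.
Proof. by rewrite /bf linear0 !mul0mx mxE. Qed.
Lemma bf0r A v : bf A v 0 = 0.
Proof. by rewrite /bf mulmx0 mxE. Qed.

Lemma quad2 A s t u v : A^T = A ->
  bf A (s *: u + t *: v) (s *: u + t *: v) =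
  s ^+ 2 * bf A u u + 2 * s * t * bf A u v + t ^+ 2 * bf A v v.
Proof.
move=> sA; rewrite !bfDl !bfDr !bfZl !bfZr (bf_sym u v sA); ring.
Qed.

Lemma quad_add A u v : A^T = A ->
  bf A (u + v) (u + v) = bf A u u + 2 * bf A u v + bf A v v.
Proof. by move=> sA; rewrite !bfDl !bfDr (bf_sym v u sA); ring. Qed.

End BF.

Section SLemma.
Variable R : realType.

Lemma pair2 (a b c p q r : R) : 0 < a -> c < 0 ->
  (forall s t, 0 <= a * s ^+ 2 + 2 * b * s * t + c * t ^+ 2 ->
               0 <= p * s ^+ 2 + 2 * q * s * t + r * t ^+ 2) ->
  0 <= r * a - p * c.
Proof.
move=> a0 c0 H.
pose D := b ^+ 2 - a * c.
have D0 : 0 < D by rewrite /D; nra.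
pose sd := Num.sqrt D.
have sd2 : sd ^+ 2 = D by rewrite /sd sqr_sqrtr // ltW.
have sd0 : 0 <= sd by rewrite /sd sqrtr_ge0.
have sdb1 : b < sd.
  rewrite ltNge; apply/negP => h.
  have : sd ^+ 2 <= b ^+ 2 by rewrite !expr2; nra.
  rewrite sd2 /D; nra.
have sdb2 : - b < sd.
  rewrite ltNge; apply/negP => h.
  have : sd ^+ 2 <= b ^+ 2 by rewrite !expr2; nra.
  rewrite sd2 /D; nra.
pose s1 := - b + sd. pose s2 := - b - sd.
have g1 : a * s1 ^+ 2 + 2 * b * s1 * a + c * a ^+ 2 = 0.
  have -> : a * s1 ^+ 2 + 2 * b * s1 * a + c * a ^+ 2 = a * (sd ^+ 2 - D)
    by rewrite /s1 /D; ring.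
  by rewrite sd2 subrr mulr0.
have g2 : a * s2 ^+ 2 + 2 * b * s2 * a + c * a ^+ 2 = 0.
  have -> : a * s2 ^+ 2 + 2 * b * s2 * a + c * a ^+ 2 = a * (sd ^+ 2 - D)
    by rewrite /s2 /D; ring.
  by rewrite sd2 subrr mulr0.
have f1 : 0 <= p * s1 ^+ 2 + 2 * q * s1 * a + r * a ^+ 2 by apply: H; rewrite g1.
have f2 : 0 <= p * s2 ^+ 2 + 2 * q * s2 * a + r * a ^+ 2 by apply: H; rewrite g2.
have key : (s1 - s2) * a * (r * a - p * c) =
   - s2 * (p * s1 ^+ 2 + 2 * q * s1 * a + r * a ^+ 2) +
     s1 * (p * s2 ^+ 2 + 2 * q * s2 * a + r * a ^+ 2) -
   (s1 - s2) * p * (sd ^+ 2 - D).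
  by rewrite /s1 /s2 /D; ring.
rewrite sd2 subrr mulr0 subr0 in key.
have s1p : 0 < s1 by rewrite /s1; lra.
have s2n : 0 < - s2 by rewrite /s2; lra.
have pos : 0 < (s1 - s2) * a by apply: mulr_gt0 => //; rewrite /s1 /s2; lra.
have : 0 <= (s1 - s2) * a * (r * a - p * c).
  rewrite key; apply: addr_ge0; apply: mulr_ge0 => //; lra.
by rewrite pmulr_rge0.
Qed.

Variable p : nat.
Implicit Types (F G : 'M[R]_p) (u v w : 'cV[R]_p).

Lemma pairv F G u v : F^T = F -> G^T = G ->
  (forall w, 0 <= bf G w w -> 0 <= bf F w w) ->
  0 < bf G u u -> bf G v v < 0 ->
  0 <= bf F v v * bf G u u - bf F u u * bf G v v.
Proof.
move=> sF sG H gu gv.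
apply: (pair2 (b := bf G u v) (q := bf F u v)) => // s t.
have := H (s *: u + t *: v); rewrite !quad2 // => H'.
have e1 : forall A : 'M[R]_p, bf A u u * s ^+ 2 + 2 * bf A u v * s * t + bf A v v * t ^+ 2 =
   s ^+ 2 * bf A u u + 2 * s * t * bf A u v + t ^+ 2 * bf A v v by move=> A; ring.
by rewrite !e1.
Qed.

Lemma slemma F G : F^T = F -> G^T = G ->
  (exists w, 0 < bf G w w) ->
  (forall w, 0 <= bf G w w -> 0 <= bf F w w) ->
  exists alpha, 0 <= alpha /\ forall w, 0 <= bf F w w - alpha * bf G w w.
Proof.
move=> sF sG [w0 gw0] H.
pose E := [set x : R | x = 0 \/ exists v, bf G v v < 0 /\ x = bf F v v / bf G v v].
have ubE : forall u, 0 < bf G u u -> ubound E (bf F u u / bf G u u).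
  move=> u gu x [->|[v [gv ->]]].
    by apply: divr_ge0; [apply: H; exact: ltW | exact: ltW].
  have := pairv sF sG H gu gv.
  rewrite subr_ge0 => h.
  by rewrite ler_pdivlMr // mulrAC ler_ndivrMr //.
have E0 : E 0 by left.
have hsE : has_sup E by split; [exists 0 | exists (bf F w0 w0 / bf G w0 w0); exact: ubE].
exists (sup E); split; first exact: sup_upper_bound.
move=> w; have [gw|gw|gw] := ltgtP (bf G w w) 0.
- have : E (bf F w w / bf G w w) by right; exists w.
  move=> /(sup_upper_bound hsE); rewrite ler_ndivrMr // subr_ge0.
  by rewrite mulrC.
- have : sup E <= bf F w w / bf G w w by apply: ge_sup; [exists 0 | exact: ubE].
  by rewrite ler_pdivlMr // subr_ge0.
- by rewrite gw mulr0 subr0; apply: H; rewrite gw.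
Qed.

End SLemma.


Section Gen.
Variable R : realType.

Lemma cnsq_eq0 p (u : 'cV[R]_p) : (u^T *m u) 0 0 = 0 -> u = 0.
Proof.
move=> h; apply: trmx_inj; rewrite trmx0; apply: nsq_eq0.
by rewrite /nsq trmxK.
Qed.

Lemma cnsq_ge0 p (u : 'cV[R]_p) : 0 <= (u^T *m u) 0 0.
Proof. by have := nsq_ge0 u^T; rewrite /nsq trmxK. Qed.

Lemma cnsq_gt0 p (u : 'cV[R]_p) : u != 0 -> 0 < (u^T *m u) 0 0.
Proof.
move=> un0; rewrite lt_def cnsq_ge0 andbT; apply/eqP => h.
by move/eqP: un0; apply; apply: cnsq_eq0.
Qed.

Lemma lemA (b c : R) : (forall t, 0 <= 2 * t * b + t ^+ 2 * c) -> b = 0.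
Proof.
move=> H; apply/eqP/negP => bn0.
pose d := `|c| + 1.
have d0 : 0 < d by rewrite /d ltr_pwDr ?normr_ge0.
have := H (- b / d).
have cd : c <= d by rewrite /d; have := ler_norm c; lra.
have e : 2 * (- b / d) * b + (- b / d) ^+ 2 * c = (b ^+ 2 / d ^+ 2) * (c - 2 * d).
  by field; rewrite gt_eqF.
have p0 : 0 < b ^+ 2 / d ^+ 2.
  apply: divr_gt0; first by rewrite lt_def sqr_ge0 andbT sqrf_eq0; apply/negP.
  by rewrite exprn_gt0.
have : (b ^+ 2 / d ^+ 2) * (c - 2 * d) < 0 by rewrite pmulr_rlt0 //; lra.
rewrite -e; lra.
Qed.

Lemma lemB (a b c : R) : (forall t, 0 < a + 2 * t * b + t ^+ 2 * c) -> c <= 0 ->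
  c = 0 /\ b = 0.
Proof.
move=> H c0.
have cz : c = 0.
  apply/eqP; rewrite eq_le c0 /=; rewrite leNgt; apply/negP => cn.
  pose s := (`|a| + 1) / (- c) + 1.
  have s1 : 1 <= s by rewrite /s lerDr divr_ge0 // ?addr_ge0 ?normr_ge0 //; lra.
  have h1 := H s. have h2 := H (- s).
  have e : c * s = - (`|a| + 1) + c by rewrite /s mulrDr mulr1; congr (_ + _); field; rewrite lt_eqF.
  have ss : s <= s ^+ 2 by rewrite expr2; nra.
  have : c * s ^+ 2 <= c * s by nra.
  have := ler_norm a. have := ler_norm (- a). rewrite normrN. nra.
split => //; apply/eqP/negP => bn0.
have := H (- (`|a| + 1) / (2 * b)); rewrite cz expr2 mulr0 addr0.
have -> : 2 * (- (`|a| + 1) / (2 * b)) * b = - (`|a| + 1) by field; apply/negP.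
have := ler_norm a; lra.
Qed.

Lemma psd_null p (A : 'M[R]_p) v : A^T = A -> (forall u, 0 <= bf A u u) ->
  bf A v v = 0 -> A *m v = 0.
Proof.
move=> sA pA h.
have hb : forall u, bf A v u = 0.
  move=> u; apply: (@lemA _ (bf A u u)) => t.
  have := pA (v + t *: u); rewrite quad_add // h add0r bfZr bfZl bfZr.
  have e : 2 * t * bf A v u + t ^+ 2 * bf A u u = 2 * (t * bf A v u) + t * (t * bf A u u) by ring.
  by rewrite e.
apply: cnsq_eq0; have := hb (A *m v); rewrite bf_sym // /bf mulmxA.
done.
Qed.

Lemma KS p q n (A : 'M[R]_(p, n)) (B : 'M[R]_(q, n)) :
  (forall v : 'cV_n, B *m v = 0 -> A *m v = 0) -> exists X, A = X *m B.
Proof.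
move=> H; apply/submxP; rewrite submxE; apply/eqP/matrixP => i j.
have : B *m col j (cokermx B) = 0 by rewrite colE mulmxA mulmx_coker mul0mx.
by move/H; rewrite colE mulmxA -colE => /matrixP /(_ i 0); rewrite !mxE.
Qed.

Lemma bf_ker p (A : 'M[R]_p) u v : A *m v = 0 -> bf A u v = 0.
Proof. by move=> h; rewrite /bf -mulmxA h mulmx0 mxE. Qed.

Lemma addE p q (X Y : 'M[R]_(p, q)) i j : (X + Y) i j = X i j + Y i j.
Proof. by rewrite mxE. Qed.

Lemma bf_block k n (A : 'M[R]_k) (B : 'M[R]_(k, n)) (C : 'M[R]_(n, k)) (D : 'M[R]_n) x1 y1 x2 y2 :
  bf (block_mx A B C D) (col_mx x1 y1) (col_mx x2 y2) =
  bf A x1 x2 + (x1^T *m B *m y2) 0 0 + (y1^T *m C *m x2) 0 0 + bf D y1 y2.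
Proof.
rewrite /bf tr_col_mx mul_row_block mul_row_col !mulmxDl !addE.
lra.
Qed.

End Gen.


Section Gen2.
Variable R : realType.

Lemma bfr p (A : 'M[R]_p) u v : bf A u v = (u^T *m (A *m v)) 0 0.
Proof. by rewrite /bf mulmxA. Qed.

Lemma qformE k n (A : 'M[R]_(k + n)) (Z : 'M[R]_(n, k)) v :
  bf (qform A Z) v v = bf A (col_mx v (Z *m v)) (col_mx v (Z *m v)).
Proof.
have e : col_mx 1%:M Z *m v = col_mx v (Z *m v) by rewrite mul_col_mx mul1mx.
by rewrite /qform /IZ /bf -e trmx_mul !mulmxA.
Qed.

Lemma qform_sym k n (A : 'M[R]_(k + n)) (Z : 'M[R]_(n, k)) :
  A^T = A -> (qform A Z)^T = qform A Z.
Proof. by move=> sA; rewrite /qform !trmx_mul trmxK sA mulmxA. Qed.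

Lemma quadZ p (A : 'M[R]_p) u v t : A^T = A ->
  bf A (u + t *: v) (u + t *: v) = bf A u u + 2 * t * bf A u v + t ^+ 2 * bf A v v.
Proof. by move=> sA; rewrite quad_add // bfZr bfZl bfZr; ring. Qed.

Lemma CS p (C : 'M[R]_p) x v : C^T = C -> (forall u, 0 <= bf C u u) ->
  0 < bf C x x -> bf C x v ^+ 2 <= bf C x x * bf C v v.
Proof.
move=> sC pC c0.
have := pC (bf C x x *: v + (- bf C x v) *: x); rewrite quad2 // (bf_sym v x sC).
have e : bf C x x ^+ 2 * bf C v v + 2 * bf C x x * - bf C x v * bf C x v +
    (- bf C x v) ^+ 2 * bf C x x = bf C x x * (bf C x x * bf C v v - bf C x v ^+ 2) by ring.
by rewrite e pmulr_rge0 // subr_ge0.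
Qed.

Lemma closed_bigcap (T : topologicalType) (I : Type) (D : set I) (F : I -> set T) :
  (forall i, D i -> closed (F i)) -> closed (\bigcap_(i in D) F i).
Proof.
move=> h x cx i Di; apply: (h i Di) => B nB.
have [y [bigy By]] := cx B nB; exists y; split => //; exact: bigy i Di.
Qed.

Lemma quadrZ m (A : 'M[R]_m) (r : 'rV[R]_m) s :
  ((s *: r) *m A *m (s *: r)^T) 0 0 = s ^+ 2 * (r *m A *m r^T) 0 0.
Proof. by rewrite linearZ /= -!scalemxAl -scalemxAr !mxE mulrA expr2. Qed.

Lemma linrZ m (u : 'cV[R]_m) (r : 'rV[R]_m) s :
  ((s *: r) *m u) 0 0 = s * (r *m u) 0 0.
Proof. by rewrite -scalemxAl mxE. Qed.

End Gen2.


Section Main.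
Variables (R : realType) (k n : nat) (M11 N11 : 'M[R]_k) (M12 N12 : 'M[R]_(k, n))
  (M22 N22 : 'M[R]_n).
Local Notation Mf := (block_mx M11 M12 M12^T M22).
Local Notation Nf := (block_mx N11 N12 N12^T N22).
Hypothesis k0 : (0 < k)%N.
Hypothesis sM : Mf^T = Mf.
Hypothesis sN : Nf^T = Nf.
Hypothesis pM : forall v, 0 <= bf (- M22) v v.
Hypothesis pN : forall v, 0 <= bf (- N22) v v.
Hypothesis kerN : forall v : 'cV_n, N22 *m v = 0 -> N12 *m v = 0.
Variable Zbar : 'M[R]_(n, k).
Hypothesis pdZ : forall v, v != 0 -> 0 < bf (qform Nf Zbar) v v.

Lemma sN22 : N22^T = N22.
Proof. by move: sN; rewrite tr_block_mx trmxK => /eq_block_mx [_ _ _ ->]. Qed.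
Lemma sM22 : M22^T = M22.
Proof. by move: sM; rewrite tr_block_mx trmxK => /eq_block_mx [_ _ _ ->]. Qed.

Lemma Z0ex : exists Z0 : 'M[R]_(n, k), N22 *m Z0 = - N12^T.
Proof.
have [X hX] := KS kerN.
exists (- X^T); rewrite mulmxN hX trmx_mul -{1}sN22; congr (- _).
Qed.

Lemma Nf_col0 (d : 'cV[R]_n) : Nf *m col_mx 0 d = col_mx (N12 *m d) (N22 *m d).
Proof. by rewrite mul_block_col !mulmx0 !add0r. Qed.
Lemma Mf_col0 (d : 'cV[R]_n) : Mf *m col_mx 0 d = col_mx (M12 *m d) (M22 *m d).
Proof. by rewrite mul_block_col !mulmx0 !add0r. Qed.

Lemma bf_row (A : 'M[R]_(k + n)) x z y (a : 'cV[R]_k) (b : 'cV[R]_n) :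
  A *m col_mx 0 y = col_mx a b ->
  bf A (col_mx x z) (col_mx 0 y) = (x^T *m a) 0 0 + (z^T *m b) 0 0.
Proof. by move=> h; rewrite bfr h tr_col_mx mul_row_col addE. Qed.

Lemma bfN22 y : bf Nf (col_mx 0 y) (col_mx 0 y) = bf N22 y y.
Proof. by rewrite (bf_row _ _ (Nf_col0 y)) trmx0 mul0mx mxE add0r bfr. Qed.
Lemma bfM22 y : bf Mf (col_mx 0 y) (col_mx 0 y) = bf M22 y y.
Proof. by rewrite (bf_row _ _ (Mf_col0 y)) trmx0 mul0mx mxE add0r bfr. Qed.

Lemma oppE p q (X : 'M[R]_(p, q)) i j : (- X) i j = - X i j.
Proof. by rewrite mxE. Qed.

Lemma scaleE p q (a : R) (X : 'M[R]_(p, q)) i j : (a *: X) i j = a * X i j.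
Proof. by rewrite mxE. Qed.
Lemma zeroE p q i j : (0 : 'M[R]_(p, q)) i j = 0.
Proof. by rewrite mxE. Qed.

Lemma bfB (beta : R) x y :
  bf (block_mx (beta%:M : 'M[R]_k) 0 0 (0 : 'M[R]_n)) (col_mx x y) (col_mx x y) =
  beta * (x^T *m x) 0 0.
Proof.
rewrite bf_block !mulmx0 !mul0mx.
by rewrite /bf mul_mx_scalar -scalemxAl mulmx0 scaleE !zeroE !addr0 mul0mx zeroE addr0.
Qed.

Section WithZ0.
Variable Z0 : 'M[R]_(n, k).
Hypothesis hZ0 : N22 *m Z0 = - N12^T.

Lemma G0 v d : bf Nf (col_mx v (Z0 *m v + d)) (col_mx v (Z0 *m v + d)) =
  bf (qform Nf Z0) v v + bf N22 d d.
Proof.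
have e : col_mx v (Z0 *m v + d) = col_mx v (Z0 *m v) + col_mx 0 d by rewrite add_col_mx addr0.
rewrite e quad_add // -qformE bfN22.
have -> : bf Nf (col_mx v (Z0 *m v)) (col_mx 0 d) = 0.
  rewrite (bf_row _ _ (Nf_col0 d)) trmx_mul -mulmxA.
  have -> : Z0^T *m (N22 *m d) = - (N12 *m d).
    by rewrite mulmxA -{1}sN22 -trmx_mul hZ0 linearN /= trmxK mulNmx.
  by rewrite mulmxN oppE addrN.
by rewrite mulr0 addr0.
Qed.

Lemma Cpd v : v != 0 -> 0 < bf (qform Nf Z0) v v.
Proof.
move=> vn0; have := pdZ vn0; rewrite qformE.
have -> : Zbar *m v = Z0 *m v + (Zbar *m v - Z0 *m v) by rewrite addrC subrK.
rewrite G0; have := pN (Zbar *m v - Z0 *m v); rewrite bfMN; lra.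
Qed.

Hypothesis Hmain : forall Z, S_N Nf Z -> pd (qform Mf Z).

Lemma H1 x y : x != 0 -> 0 <= bf Nf (col_mx x y) (col_mx x y) ->
  0 < bf Mf (col_mx x y) (col_mx x y).
Proof.
move=> xn0 gxy.
set C := qform Nf Z0.
have sC : C^T = C by apply: qform_sym.
have pC : forall u, 0 <= bf C u u.
  move=> u; have [->|un0] := eqVneq u 0; first by rewrite bf0l.
  exact/ltW/Cpd.
set e := y - Z0 *m x.
have ye : y = Z0 *m x + e by rewrite /e addrC subrK.
have g' : 0 <= bf C x x + bf N22 e e by rewrite /C -G0 -ye.
set c0 := bf C x x.
have c0p : 0 < c0 := Cpd xn0.
set Z := Z0 + c0^-1 *: (e *m (x^T *m C)).
have Zv : forall v, Z *m v = Z0 *m v + (c0^-1 * bf C x v) *: e.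
  move=> v; rewrite mulmxDl -scalemxAl -mulmxA [(x^T *m C) *m v]mx11_scalar.
  by rewrite mul_mx_scalar scalerA.
have SZ : S_N Nf Z.
  move=> v; rewrite -/(bf (qform Nf Z) v v) qformE Zv G0 bfZl bfZr.
  set t := bf C x v; set a := c0^-1 * t.
  have ta : t = a * c0 by rewrite /a mulrAC mulVf ?mul1r // gt_eqF.
  have cs : t ^+ 2 <= c0 * bf C v v by apply: CS.
  rewrite ta in cs.
  have h1 : a ^+ 2 * c0 <= bf C v v.
    rewrite -(@ler_pM2l _ c0) //; move: cs; rewrite !expr2; nra.
  rewrite -/C -/c0 in g'; nra.
have := Hmain SZ xn0; rewrite -/(bf (qform Mf Z) x x) qformE Zv.
by rewrite mulVf ?gt_eqF // scale1r -ye.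
Qed.

End WithZ0.

Section Fwd.
Hypothesis Hmain : forall Z, S_N Nf Z -> pd (qform Mf Z).

Lemma H1' x y : x != 0 -> 0 <= bf Nf (col_mx x y) (col_mx x y) ->
  0 < bf Mf (col_mx x y) (col_mx x y).
Proof. by have [Z0 hZ0] := Z0ex; exact: (H1 hZ0 Hmain). Qed.

Lemma NK (k' : 'cV[R]_n) : N22 *m k' = 0 -> Nf *m col_mx 0 k' = 0.
Proof. by move=> h; rewrite Nf_col0 h kerN // col_mx0. Qed.

Lemma H2 (k' : 'cV[R]_n) : N22 *m k' = 0 -> Mf *m col_mx 0 k' = 0.
Proof.
move=> hk; set q := col_mx 0 k'.
have L : forall x : 'cV[R]_k, x != 0 -> M22 *m k' = 0 /\ (x^T *m (M12 *m k')) 0 0 = 0.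
  move=> x xn0; set w0 := col_mx x (Zbar *m x).
  have ew : forall t, w0 + t *: q = col_mx x (Zbar *m x + t *: k').
    by move=> t; rewrite /w0 /q scale_col_mx scaler0 add_col_mx addr0.
  have g0 : 0 < bf Nf w0 w0 by rewrite /w0 -qformE; exact: pdZ.
  have gt : forall t, 0 <= bf Nf (w0 + t *: q) (w0 + t *: q).
    move=> t; rewrite quadZ // !(bf_ker _ (NK hk)) !mulr0 !addr0; exact: ltW.
  have ft : forall t, 0 < bf Mf w0 w0 + 2 * t * bf Mf w0 q + t ^+ 2 * bf Mf q q.
    by move=> t; rewrite -quadZ // ew; apply: H1' => //; rewrite -ew; exact: gt.
  have c0 : bf Mf q q <= 0 by rewrite /q bfM22; have := pM k'; rewrite bfMN; lra.
  have [cz bz] := lemB ft c0.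
  have M22k : M22 *m k' = 0.
    have : (- M22) *m k' = 0.
      apply: psd_null => //; first by rewrite linearN /= sM22.
      by rewrite bfMN -bfM22 -/q cz oppr0.
    by rewrite mulNmx => /eqP; rewrite oppr_eq0 => /eqP.
  split => //; move: bz; rewrite /w0 /q (bf_row _ _ (Mf_col0 k')) M22k mulmx0 mxE.
  by rewrite mxE addr0.
have x1n0 : (const_mx 1 : 'cV[R]_k) != 0.
  apply/eqP => /matrixP /(_ (Ordinal k0) 0); rewrite !mxE => /eqP; by rewrite oner_eq0.
have [M22k _] := L _ x1n0.
have M12k : M12 *m k' = 0.
  have [//|un0] := eqVneq (M12 *m k') 0.
  by have [_ h] := L _ un0; apply: cnsq_eq0.
by rewrite /q Mf_col0 M22k M12k col_mx0.
Qed.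

Lemma Dec (y : 'cV[R]_n) : exists z k', y = N22 *m z + k' /\ N22 *m k' = 0.
Proof.
have [X hX] : exists X, N22 = X *m (N22 *m N22).
  apply: KS => v h; apply: cnsq_eq0.
  by rewrite trmx_mul sN22 -mulmxA (mulmxA N22 N22 v) h mulmx0 mxE.
have hX' : N22 = N22 *m N22 *m X^T.
  by rewrite -{1}sN22 {1}hX !trmx_mul sN22.
exists (X^T *m y), (y - N22 *m (X^T *m y)); split; first by rewrite addrC subrK.
by rewrite mulmxBr !mulmxA -hX' subrr.
Qed.

Lemma claimA : exists beta, 0 < beta /\ forall x y,
  0 <= bf Nf (col_mx x y) (col_mx x y) ->
  beta * (x^T *m x) 0 0 <= bf Mf (col_mx x y) (col_mx x y).
Proof.
pose gq (r : 'rV[R]_(k + n)) := (r *m Nf *m r^T) 0 0.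
pose lin (u : 'cV[R]_(k + n)) (r : 'rV[R]_(k + n)) := (r *m u) 0 0.
pose P := gq @^-1` [set z | 0 <= z] `&`
  \bigcap_(k' in [set k' : 'cV[R]_n | N22 *m k' = 0])
     (lin (col_mx 0 k') @^-1` [set z | z <= 0] `&` lin (col_mx 0 k') @^-1` [set z | 0 <= z]).
have bfT : forall A (r : 'rV[R]_(k + n)), bf A r^T r^T = (r *m A *m r^T) 0 0.
  by move=> A r; rewrite /bf trmxK.
have Porth : forall r, P r -> forall k', N22 *m k' = 0 -> lin (col_mx 0 k') r = 0.
  move=> r [_ Po] k' hk'; have [h1 h2] := Po k' hk'.
  by apply/eqP; rewrite eq_le h1 h2.
have closedP : closed P.
  apply: closedI.
    by apply: preimage_closed; [move=> r _; exact: cont_quad | exact: closed_ge].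
  apply: closed_bigcap => k' _; apply: closedI; apply: preimage_closed;
    try (by move=> r _; exact: cont_lin); [exact: closed_le | exact: closed_ge].
have pos : forall r, P r -> r != 0 -> 0 < (r *m Mf *m r^T) 0 0.
  move=> r Pr rn0; have Pg : 0 <= gq r by case: Pr.
  set w := r^T.
  have wE : w = col_mx (usubmx w) (dsubmx w) by rewrite vsubmxK.
  rewrite -bfT -/w wE.
  have [x0|xn0] := eqVneq (usubmx w) 0; last first.
    by apply: H1' => //; rewrite -wE /w bfT.
  exfalso; move/eqP: rn0; apply.
  set y := dsubmx w; rewrite x0 -/y in wE.
  have gy : 0 <= bf N22 y y by rewrite -bfN22 -wE /w bfT.
  have hy : N22 *m y = 0.
    have : (- N22) *m y = 0.
      apply: psd_null => //; first by rewrite linearN /= sN22.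
      by have := pN y; rewrite !bfMN; lra.
    by rewrite mulNmx => /eqP; rewrite oppr_eq0 => /eqP.
  have := Porth r Pr y hy; rewrite /lin -[r]trmxK -/w wE tr_col_mx mul_row_col.
  rewrite trmx0 mul0mx add0r => /cnsq_eq0 y0.
  by rewrite y0 trmx0 row_mx0.
have scP : forall r s, P r -> 0 < s -> P (s *: r).
  move=> r s Pr s0; split.
    by case: Pr => Pg _; rewrite /= /gq quadrZ; apply: mulr_ge0 => //; exact: sqr_ge0.
  move=> k' hk'; rewrite /= /lin linrZ; have := Porth r Pr k' hk'; rewrite /lin => ->.
  by rewrite mulr0 lexx.
have scq : forall (r : 'rV[R]_(k + n)) (s : R), ((s *: r) *m Mf *m (s *: r)^T) 0 0 = s ^+ 2 * (r *m Mf *m r^T) 0 0.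
  by move=> r s; exact: quadrZ.
have [beta [beta0 hb]] := cone_unif (@cont_quad _ _ Mf) closedP pos scP scq.
exists beta; split => // x y gxy.
have [z [k' [yE hk']]] := Dec y.
set w1 := col_mx x (N22 *m z).
have wE : col_mx x y = w1 + col_mx 0 k' by rewrite yE /w1 add_col_mx addr0.
have gE : bf Nf (col_mx x y) (col_mx x y) = bf Nf w1 w1.
  by rewrite wE quad_add // !(bf_ker _ (NK hk')) mulr0 !addr0.
have fE : bf Mf (col_mx x y) (col_mx x y) = bf Mf w1 w1.
  by rewrite wE quad_add // !(bf_ker _ (H2 hk')) mulr0 !addr0.
have P1 : P w1^T.
  split; first by rewrite /= /gq -bfT trmxK -gE.
  move=> k'' hk''; rewrite /= /lin.
  have e : (w1^T *m col_mx 0 k'') 0 0 = 0.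
    by rewrite /w1 tr_col_mx mul_row_col mulmx0 add0r trmx_mul sN22 -mulmxA hk'' mulmx0 mxE.
  by rewrite e lexx.
have := hb _ P1; rewrite -bfT trmxK -fE => h.
apply: le_trans h; apply: ler_wpM2l; first exact: ltW.
rewrite /nsq trmxK /w1 tr_col_mx mul_row_col addE lerDl; exact: cnsq_ge0.
Qed.

Lemma forward : exists alpha beta : R, 0 <= alpha /\ 0 < beta /\
  psd (Mf - alpha *: Nf - block_mx (beta%:M : 'M[R]_k) 0 0 (0 : 'M[R]_n)).
Proof.
have [beta [beta0 hb]] := claimA.
set Bk := block_mx (beta%:M : 'M[R]_k) 0 0 (0 : 'M[R]_n).
have sB : Bk^T = Bk by rewrite /Bk tr_block_mx tr_scalar_mx !trmx0.
have sF : (Mf - Bk)^T = Mf - Bk by rewrite linearB /= sM sB.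
have slater : exists w, 0 < bf Nf w w.
  have x1n0 : (const_mx 1 : 'cV[R]_k) != 0.
    apply/eqP => /matrixP /(_ (Ordinal k0) 0); rewrite !mxE => /eqP; by rewrite oner_eq0.
  exists (col_mx (const_mx 1) (Zbar *m const_mx 1)); rewrite -qformE; exact: pdZ.
have hyp : forall w, 0 <= bf Nf w w -> 0 <= bf (Mf - Bk) w w.
  move=> w; rewrite -[w]vsubmxK bfMB bfB subr_ge0; exact: hb.
have [alpha [a0 ha]] := slemma sF sN slater hyp.
exists alpha, beta; split => //; split => // v.
rewrite -/(bf _ v v) !bfMB bfMZ; have := ha v; rewrite bfMB; lra.
Qed.

End Fwd.

Lemma backward alpha beta : 0 <= alpha -> 0 < beta ->
  psd (Mf - alpha *: Nf - block_mx (beta%:M : 'M[R]_k) 0 0 (0 : 'M[R]_n)) ->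
  forall Z, S_N Nf Z -> pd (qform Mf Z).
Proof.
move=> a0 b0 hp Z hZ v vn0.
rewrite -/(bf (qform Mf Z) v v) qformE.
have := hp (col_mx v (Z *m v)); rewrite -/(bf _ _ _) !bfMB bfMZ bfB.
have := hZ v; rewrite -/(bf _ _ _) qformE => g.
have := cnsq_gt0 vn0 => vv.
have h1 : 0 <= alpha * bf Nf (col_mx v (Z *m v)) (col_mx v (Z *m v)) by apply: mulr_ge0.
have h2 : 0 < beta * (v^T *m v) 0 0 by apply: mulr_gt0.
lra.
Qed.
End Main.


Local Close Scope classical_set_scope.
Theorem theorem6 (R : realType) (k n : nat)
  (M11 N11 : 'M[R]_k) (M12 N12 : 'M[R]_(k, n)) (M22 N22 : 'M[R]_n) :
  (0 < k)%N ->
  sym_mx (block_mx M11 M12 M12^T M22) ->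
  sym_mx (block_mx N11 N12 N12^T N22) ->
  psd (- M22) -> psd (- N22) ->
  (forall v : 'cV[R]_n, N22 *m v = 0 -> N12 *m v = 0) ->
  (exists Zbar : 'M[R]_(n, k), pd (qform (block_mx N11 N12 N12^T N22) Zbar)) ->
  ((forall Z : 'M[R]_(n, k), S_N (block_mx N11 N12 N12^T N22) Z ->
       pd (qform (block_mx M11 M12 M12^T M22) Z))
   <->
   (exists alpha beta : R, 0 <= alpha /\ 0 < beta /\
      psd (block_mx M11 M12 M12^T M22 - alpha *: block_mx N11 N12 N12^T N22
           - block_mx (beta%:M : 'M[R]_k) 0 0 (0 : 'M[R]_n)))).
Proof.
move=> k0 sM sN pM pN kerN [Zbar pdZ]; split.
- by move=> Hmain; apply: (forward k0 sM sN pM pN kerN pdZ Hmain).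
- by move=> [alpha [beta [a0 [b0 hp]]]]; apply: (backward a0 b0 hp).
Qed.
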